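(* Let $\mathcal{W}$ be the smallest class of digraphs such that: (1) every transitive oriented graph is in $\mathcal{W}$; (2) every semicomplete digraph is in $\mathcal{W}$; (3) every symmetric digraph is in $\mathcal{W}$; (4) if $D \in \mathcal{W}$ has vertices $v_1,\dots,v_n$ and $H_1,\dots,H_n \in \mathcal{W}$, then $D[H_1,\dots,H_n] \in \mathcal{W}$. Then $\mathcal{W}$ is exactly the class of weakly quasi-transitive digraphs.
   Context: Digraphs are finite, have no loops and no multiple arcs, but may contain digons; an arc lying in a digon is called symmetric, otherwise non-symmetric. An oriented graph has no symmetric arc; a symmetric digraph has only symmetric arcs. A transitive oriented graph is an oriented graph such that arcs $uv$ and $vw$ imply the arc $uw$. A digraph is semicomplete if between any two distinct vertices there is at least one arc. $N^-(v)$ / $N^+(v)$ denote the sets of in-/out-neighbours of $v$; two vertices are adjacent if there is at least one arc between them. Two neighbours $u,w$ of $v$ are synchronous neighbours of $v$ if both lie in $N^-(v)\setminus N^+(v)$, or both in $N^+(v)\setminus N^-(v)$, or both in $N^-(v)\cap N^+(v)$; otherwise they are asynchronous. A digraph is weakly quasi-transitive if for each vertex $v$, any two asynchronous neighbours of $v$ are adjacent. For a digraph $D$ with vertices $v_1,\dots,v_n$ and vertex-disjoint digraphs $H_1,\dots,H_n$, the substitution $D[H_1,\dots,H_n]$ is the digraph obtained from the disjoint union of $H_1,\dots,H_n$ by adding all arcs $xy$ with $x \in V(H_i)$, $y \in V(H_j)$ for every arc $v_iv_j$ of $D$. *)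

(* Defs.v *)
From mathcomp Require Import all_boot.
Set Implicit Arguments. Unset Strict Implicit. Unset Printing Implicit Defensive.

(* A digraph on the finite vertex type T is an arc relation E : rel T;
   E u v means there is an arc uv.  No multiple arcs by construction;
   "no loops" is the hypothesis irreflexive E. *)

Section Digraphs.
Variable T : finType.
Implicit Types E : rel T.

Definition is_digraph E := irreflexive E.

Definition oriented E := forall u v, E u v -> ~~ E v u.
Definition symmetric_digraph E := forall u v, E u v -> E v u.
Definition transitive_oriented E :=
  oriented E /\ (forall u v w, E u v -> E v w -> E u w).
Definition semicomplete E := forall u v, u != v -> E u v || E v u.

Definition adjacent E u v := E u v || E v u.

Definition in_only E v w := E w v && ~~ E v w.
Definition out_only E v w := E v w && ~~ E w v.
Definition both_nb E v w := E w v && E v w.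

Definition synchronous E v u w :=
  [|| in_only E v u && in_only E v w,
      out_only E v u && out_only E v w |
      both_nb E v u && both_nb E v w].

Definition asynchronous E v u w :=
  adjacent E v u && adjacent E v w && ~~ synchronous E v u w.

Definition weakly_quasi_transitive E :=
  forall v u w, asynchronous E v u w -> adjacent E u w.
End Digraphs.

(* Substitution D[H_t : t in T]: vertex set is the disjoint union
   {t : T & U t}; arcs inside a block come from H_t, arcs between blocks
   x in H_i, y in H_j (i <> j) exist iff v_i v_j is an arc of D. *)
Definition subst_rel (T : finType) (D : rel T) (U : T -> finType)
  (H : forall t, rel (U t)) : rel {t : T & U t} :=
  fun x y => if tag x == tag y then H (tag x) (tagged x) (tagged_as x y)
             else D (tag x) (tag y).

Inductive inW : forall T : finType, rel T -> Prop :=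
| W_trans (T : finType) (E : rel T) :
    is_digraph E -> transitive_oriented E -> inW E
| W_semi (T : finType) (E : rel T) :
    is_digraph E -> semicomplete E -> inW E
| W_sym (T : finType) (E : rel T) :
    is_digraph E -> symmetric_digraph E -> inW E
| W_subst (T : finType) (D : rel T) (U : T -> finType)
    (H : forall t, rel (U t)) :
    inW D -> (forall t, inW (H t)) -> inW (subst_rel D H)
| W_iso (T T' : finType) (E : rel T) (E' : rel T') (f : T -> T') :
    bijective f -> (forall x y, E' (f x) (f y) = E x y) ->
    inW E -> inW E'.

(* Main.v *)
Require Import Defs.
From mathcomp Require Import all_boot.
From mathcomp Require Import zify.
Set Implicit Arguments. Unset Strict Implicit. Unset Printing Implicit Defensive.


Lemma ar1 a b n : a <= n.+1 -> 1 < b -> b < a -> (a - b).+1 <= n. Proof. lia. Qed.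
Lemma ar2 a b : 1 < a - b -> b.+1 < a. Proof. lia. Qed.
Lemma ar3 a b : a - b < 2 -> b < a -> a - b = 1. Proof. lia. Qed.

Section Generic.
Variable T : finType.

Lemma conn_prop (R : rel T) (P : T -> bool) x y :
  (forall a b, R a b -> P a -> P b) -> connect R x y -> P x -> P y.
Proof.
move=> HR /connectP [p Hp ->]; elim: p x Hp => [|a p IH] x //= /andP [Hxa Hp] Px.
exact: IH Hp (HR _ _ Hxa Px).
Qed.

Lemma conn_exit (R : rel T) (P : {pred T}) x y :
  connect R x y -> x \in P -> y \notin P ->
  exists u v, [/\ u \in P, v \notin P & R u v].
Proof.
move=> Hc Hx Hy.
case: (boolP [exists u, exists v, [&& u \in P, v \notin P & R u v]]).
  by move=> /existsP [u /existsP [v /and3P [H1 H2 H3]]]; exists u, v.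
move=> /existsPn Hn; case/negP: Hy; apply: (conn_prop (P := fun w => w \in P) _ Hc Hx) => a b Rab Pa.
apply/negPn/negP => Pb; move: (Hn a) => /existsPn /(_ b); by rewrite Pa Pb Rab.
Qed.

Lemma conn_map (R R' : rel T) (f : T -> T) x y :
  (forall a b, R a b -> f a = f b \/ R' (f a) (f b)) ->
  connect R x y -> connect R' (f x) (f y).
Proof.
move=> H Hc; apply: (conn_prop (P := fun w => connect R' (f x) (f w))) Hc _ => //.
move=> a b /H [->|Hab] // Ha; exact: connect_trans Ha (connect1 Hab).
Qed.

Lemma conn_sub (R R' : rel T) x y :
  (forall a b, R a b -> R' a b) -> connect R x y -> connect R' x y.
Proof. by move=> H; apply: connect_sub => a b /H; apply: connect1. Qed.

End Generic.

Section Core.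
Variable T : finType.
Variable E : rel T.
Hypothesis irrE : irreflexive E.
Hypothesis wqtE : weakly_quasi_transitive E.
Implicit Types (S M : {set T}) (R : rel T) (x y z : T).

Definition adj x y := E x y || E y x.
Definition dig x y := E x y && E y x.
Definition ow x y := E x y != E y x.
Definition nadj x y := (x != y) && ~~ adj x y.
Definition rS (S : {set T}) (R : rel T) : rel T :=
  fun x y => [&& x \in S, y \in S & R x y].
Definition connb (S : {set T}) (R : rel T) :=
  [forall x in S, forall y in S, connect (rS S R) x y].
Definition strongb S := connb S E.

Lemma connbP S R :
  reflect (forall x y, x \in S -> y \in S -> connect (rS S R) x y) (connb S R).
Proof.
apply: (iffP forall_inP) => [H x y xS yS|H x xS].
  by move/forall_inP: (H x xS); apply.
by apply/forall_inP => y yS; apply: H.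
Qed.

Lemma adjC x y : adj x y = adj y x. Proof. by rewrite /adj orbC. Qed.
Lemma digC x y : dig x y = dig y x. Proof. by rewrite /dig andbC. Qed.
Lemma owC x y : ow x y = ow y x. Proof. by rewrite /ow eq_sym. Qed.
Lemma nadjC x y : nadj x y = nadj y x. Proof. by rewrite /nadj adjC eq_sym. Qed.
Lemma adjxx x : adj x x = false. Proof. by rewrite /adj irrE. Qed.
Lemma ow_adj x y : ow x y -> adj x y.
Proof. by rewrite /ow /adj; case: (E x y); case: (E y x). Qed.
Lemma dig_adj x y : dig x y -> adj x y.
Proof. by rewrite /dig /adj; case: (E x y); case: (E y x). Qed.
Lemma ow_dig x y : ow x y -> ~~ dig x y.
Proof. by rewrite /ow /dig; case: (E x y); case: (E y x). Qed.
Lemma adj_neq x y : adj x y -> x != y.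
Proof. by apply: contraTneq => ->; rewrite adjxx. Qed.

Lemma rS_sym S R : symmetric R -> symmetric (rS S R).
Proof. by move=> HR x y; rewrite /rS HR andbCA. Qed.

Lemma connS_sym S R : symmetric R -> connect_sym (rS S R).
Proof. by move=> HR; apply: sym_connect_sym; apply: rS_sym. Qed.

Lemma same v u w : adj v u -> adj v w -> ~~ adj u w ->
  E v u = E v w /\ E u v = E w v.
Proof.
move: (@wqtE v u w); rewrite /asynchronous /synchronous /in_only /out_only
  /both_nb /adjacent /adj.
case: (E v u); case: (E u v); case: (E v w); case: (E w v);
  case: (E u w); case: (E w u) => //=; by move=> /(_ isT).
Qed.


Definition tyeq z a b := E z a = E z b /\ E a z = E b z.
Definition module S M := M \subset S /\
  (forall z a b, z \in S -> z \notin M -> a \in M -> b \in M -> tyeq z a b).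

Lemma conn_lift S S2 R a b : S \subset S2 -> connect (rS S R) a b -> connect (rS S2 R) a b.
Proof.
move=> /subsetP HS; apply: conn_sub => u v /and3P [uS vS H].
by rewrite /rS (HS _ uS) (HS _ vS) H.
Qed.

Definition compo S R x := [set w in S | connect (rS S R) x w].

Lemma compo_step S R x a b : a \in compo S R x -> b \in S -> R a b -> b \in compo S R x.
Proof.
rewrite !inE => /andP [aS Ha] bS Hab; rewrite bS /=.
by apply: connect_trans Ha (connect1 _); rewrite /rS aS bS.
Qed.

Lemma compo_sub S R x : compo S R x \subset S.
Proof. by apply/subsetP => w; rewrite inE => /andP []. Qed.

Lemma compo_self S R x : x \in S -> x \in compo S R x.
Proof. by move=> xS; rewrite inE xS connect0. Qed.

Lemma comp_module S R x : x \in S ->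
  (forall z a b, z \in S -> z \notin compo S R x -> a \in compo S R x -> b \in S ->
     R a b -> tyeq z a b) ->
  module S (compo S R x).
Proof.
move=> xS Hstep; split; first exact: compo_sub.
have key : forall z c, z \in S -> z \notin compo S R x -> c \in compo S R x -> tyeq z x c.
  move=> z c zS zC cC; move: (cC); rewrite inE => /andP [cS Hc].
  have st : forall a b, rS S R a b ->
      [&& a \in compo S R x, E z x == E z a & E x z == E a z] ->
      [&& b \in compo S R x, E z x == E z b & E x z == E b z].
    move=> a b /and3P [aS bS Hab] /and3P [aC /eqP Ha1 /eqP Ha2].
    have [Hb1 Hb2] := Hstep z a b zS zC aC bS Hab.
    by rewrite (compo_step aC bS Hab) Ha1 Hb1 Ha2 Hb2 !eqxx.
  have := conn_prop (P := fun w => [&& w \in compo S R x, E z x == E z w & E x z == E w z])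
    st Hc; rewrite compo_self // !eqxx => /(_ isT) /and3P [_ /eqP H1 /eqP H2] //.
move=> z a b zS zC aC bC; have [A1 A2] := key z a zS zC aC; have [B1 B2] := key z b zS zC bC.
by split; rewrite -?A1 -?A2 -?B1 -?B2.
Qed.

Lemma Hcomp_module S x : x \in S -> module S (compo S nadj x).
Proof.
move=> xS; apply: comp_module => // z a b zS zC aC bS /andP [ab Hab].
have bC := compo_step aC bS (introT andP (conj ab Hab)).
have Hadj : forall c, c \in compo S nadj x -> adj z c.
  move=> c cC; apply/negPn/negP => Hn; case/negP: (zC); apply: (compo_step cC zS).
  rewrite /nadj adjC Hn andbT; apply/negP => /eqP Ec; by move: zC; rewrite -Ec cC.
exact: same (Hadj a aC) (Hadj b bC) Hab.
Qed.

Lemma Acomp_module S x : x \in S -> module S (compo S ow x).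
Proof.
move=> xS; apply: comp_module => // z a b zS zC aC bS Hab.
have bC := compo_step aC bS Hab.
have Hno : forall c, c \in compo S ow x -> ~~ ow z c.
  by move=> c cC; apply/negP => Hc; case/negP: (zC); apply: (compo_step cC zS); rewrite owC.
move: (Hno a aC) (Hno b bC); rewrite /ow !negbK => /eqP Ha /eqP Hb.
rewrite /tyeq -Ha -Hb.
case Eza: (E z a).
  case Ezb: (E z b) => //; exfalso.
  have Hn : ~~ adj z b by rewrite /adj Ezb -Hb Ezb.
  have A1 : adj a z by rewrite /adj -Ha Eza.
  have [H1 H2] := same A1 (ow_adj Hab) Hn.
  by move: Hab; rewrite /ow -H1 -H2 -Ha Eza.
case Ezb: (E z b) => //; exfalso.
have Hn : ~~ adj z a by rewrite /adj Eza -Ha Eza.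
have A1 : adj b z by rewrite /adj -Hb Ezb.
have A2 : adj b a by rewrite adjC; exact: ow_adj.
have [H1 H2] := same A1 A2 Hn.
by move: Hab; rewrite /ow -H1 -H2 -Hb Ezb.
Qed.

Lemma strong_add S z : strongb S -> z \notin S ->
  (exists2 s, s \in S & E z s) -> (exists2 s, s \in S & E s z) -> strongb (z |: S).
Proof.
move=> /connbP HS zS [s sS Hzs] [s' s'S Hs'z].
have sub : S \subset z |: S by apply/subsetP => w wS; rewrite in_setU1 wS orbT.
have zz : z \in z |: S by rewrite in_setU1 eqxx.
apply/connbP => x y; rewrite !in_setU1 => /predU1P [->|xS] /predU1P [->|yS].
- exact: connect0.
- apply: connect_trans (connect1 _) (conn_lift sub (HS _ _ sS yS)).
  by rewrite /rS zz in_setU1 sS orbT Hzs.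
- apply: connect_trans (conn_lift sub (HS _ _ xS s'S)) (connect1 _).
  by rewrite /rS zz in_setU1 s'S orbT Hs'z.
- exact: conn_lift sub (HS _ _ xS yS).
Qed.

Lemma abs_out S z s : strongb S -> (forall c, c \in S -> ~~ E c z) -> s \in S -> E z s ->
  forall c, c \in S -> E z c.
Proof.
move=> /connbP HS Hn sS Hzs c cS.
apply: (conn_prop (P := E z) _ (HS s c sS cS) Hzs) => a b /and3P [aS bS Hab] Hza.
have : adj z b.
  apply/negPn/negP => Hnb.
  have A1 : adj a z by rewrite /adj Hza orbT.
  have A2 : adj a b by rewrite /adj Hab.
  have [H1 _] := same A1 A2 Hnb.
  by move: (Hn a aS); rewrite H1 Hab.
rewrite /adj => /orP [] // Hbz; by move: (Hn b bS); rewrite Hbz.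
Qed.

Lemma abs_in S z s : strongb S -> (forall c, c \in S -> ~~ E z c) -> s \in S -> E s z ->
  forall c, c \in S -> E c z.
Proof.
move=> /connbP HS Hn sS Hsz c cS; apply/negPn/negP => Hcz.
have st : forall a b, rS S E a b -> ~~ E a z -> ~~ E b z.
  move=> a b /and3P [aS bS Hab] Haz; apply/negP => Hbz.
  have : adj a z.
    apply/negPn/negP => Hna.
    have A1 : adj b a by rewrite /adj Hab orbT.
    have A2 : adj b z by rewrite /adj Hbz.
    have [_ H2] := same A1 A2 Hna.
    by move: (Hn b bS); rewrite -H2 Hab.
  rewrite /adj (negbTE Haz) /= => Hza; by move: (Hn a aS); rewrite Hza.
have := conn_prop (P := fun w => ~~ E w z) st (HS c s cS sS) Hcz; by rewrite Hsz.
Qed.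

Lemma maxstrong S : 1 < #|S| -> exists S',
  [/\ S' \proper S, strongb S', S' != set0 &
      forall S'', S'' \proper S -> strongb S'' -> #|S''| <= #|S'|].
Proof.
move=> /card_gt1P [x [y [xS yS xy]]].
pose P k := [exists S' : {set T}, [&& S' \proper S, strongb S', S' != set0 & #|S'| == k]].
have exP : exists k, P k.
  exists 1; apply/existsP; exists [set x]; rewrite cards1 eqxx andbT.
  apply/and3P; split.
  - rewrite properE sub1set xS /=; apply/subsetPn; exists y => //.
    by rewrite in_set1 eq_sym.
  - by apply/connbP => a b; rewrite !in_set1 => /eqP -> /eqP ->; apply: connect0.
  - by apply/set0Pn; exists x; rewrite in_set1.
have ubP : forall k, P k -> k <= #|S|.
  by move=> k /existsP [S' /and4P [pS _ _ /eqP <-]]; apply: ltnW; apply: proper_card.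
case: (ex_maxnP exP ubP) => k /existsP [S' /and4P [pS sS nS /eqP Hk]] Hmax.
exists S'; split => // S'' pS'' sS''; rewrite Hk.
case: (boolP (S'' == set0)) => [/eqP -> | nS'']; first by rewrite cards0.
by apply: Hmax; apply/existsP; exists S''; rewrite pS'' sS'' nS'' eqxx.
Qed.

Lemma maxstrong_module S S' : S' \proper S -> strongb S' ->
  (forall S'', S'' \proper S -> strongb S'' -> #|S''| <= #|S'|) ->
  (forall z, z \in S -> z \notin S' -> strongb (z |: S') -> z |: S' \proper S) ->
  module S S'.
Proof.
move=> pS sS Hmax Hpr; split; first by move: pS; rewrite properE => /andP [].
move=> z a b zS zS' aS bS.
case: (boolP [exists s in S', E z s]) => [/exists_inP [s sS' Hzs]|/exists_inPn Hout];
case: (boolP [exists s in S', E s z]) => [/exists_inP [s' s'S Hs'z]|/exists_inPn Hin].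
- exfalso; have sz : strongb (z |: S') by apply: strong_add => //; [exists s|exists s'].
  have := Hmax _ (Hpr z zS zS' sz) sz; by rewrite cardsU1 zS' ltnn.
- have Ha := abs_out sS Hin sS' Hzs.
  split; first by rewrite (Ha a aS) (Ha b bS).
  by rewrite (negbTE (Hin a aS)) (negbTE (Hin b bS)).
- have Ha := abs_in sS Hout s'S Hs'z.
  split; last by rewrite (Ha a aS) (Ha b bS).
  by rewrite (negbTE (Hout a aS)) (negbTE (Hout b bS)).
- by split; [rewrite (negbTE (Hout a aS)) (negbTE (Hout b bS)) | rewrite (negbTE (Hin a aS)) (negbTE (Hin b bS))].
Qed.

Definition semi_on S := forall x y, x \in S -> y \in S -> x != y -> adj x y.
Definition sym_on S := forall x y, x \in S -> y \in S -> E x y -> E y x.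
Definition tor_on S := (forall x y, x \in S -> y \in S -> E x y -> ~~ E y x) /\
  (forall x y w, x \in S -> y \in S -> w \in S -> E x y -> E y w -> E x w).

Lemma connbPn S R : ~~ connb S R ->
  exists p q, [/\ p \in S, q \in S & ~~ connect (rS S R) p q].
Proof.
move=> /forall_inPn [p pS] /forall_inPn [q qS Hn]; by exists p, q.
Qed.

Lemma exit1 S R x y : connect (rS S R) x y -> x != y ->
  exists2 v, v \in S & (v != x) && R x v.
Proof.
move=> Hc xy.
have Hx : x \in pred1 x by rewrite inE.
have Hy : y \notin pred1 x by rewrite inE eq_sym.
have [u [v [uI vI /and3P [uS vS Ruv]]]] := conn_exit Hc Hx Hy.
move: uI vI; rewrite !inE => /eqP Eu vx; subst u; exists v => //; by rewrite vx.
Qed.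

Lemma two_in S x : x \in S -> 1 < #|S| -> exists2 y, y \in S & y != x.
Proof.
move=> xS /card_gt1P [a [b [aS bS ab]]].
case: (eqVneq a x) => [Ea|ax]; last by exists a.
by exists b => //; rewrite -Ea eq_sym.
Qed.

Lemma hnbr S x : connb S nadj -> 1 < #|S| -> x \in S -> exists2 y, y \in S & nadj x y.
Proof.
move=> /connbP HS Hc xS; have [y yS yx] := two_in xS Hc.
have [v vS /andP [_ Hv]] := exit1 (HS x y xS yS) (ltac:(by rewrite eq_sym)).
by exists v.
Qed.

Lemma outnbr S x : strongb S -> 1 < #|S| -> x \in S -> exists2 y, y \in S & E x y.
Proof.
move=> /connbP HS Hc xS; have [y yS yx] := two_in xS Hc.
have [v vS /andP [_ Hv]] := exit1 (HS x y xS yS) (ltac:(by rewrite eq_sym)).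
by exists v.
Qed.

Lemma semi_not_hconn S : semi_on S -> connb S nadj -> 1 < #|S| -> False.
Proof.
move=> Hs Hh Hc; have [x [_ [xS _ _]]] := card_gt1P Hc.
have [y yS /andP [xy Hn]] := hnbr Hh Hc xS.
by move: (Hs x y xS yS xy); rewrite (negbTE Hn).
Qed.

Lemma tor_not_strong S : tor_on S -> strongb S -> 1 < #|S| -> False.
Proof.
move=> [Ho Ht] /connbP HS /card_gt1P [x [y [xS yS xy]]].
have key : forall a b, a \in S -> b \in S -> a != b -> connect (rS S E) a b -> E a b.
  move=> a b aS bS ab Hc.
  have st : forall u v, rS S E u v -> (u == a) || E a u -> (v == a) || E a v.
    move=> u v /and3P [uS vS Huv] /orP [/eqP Eu|Hau]; first by subst u; rewrite Huv orbT.
    by rewrite (Ht a u v aS uS vS Hau Huv) orbT.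
  have := conn_prop st Hc; rewrite eqxx => /(_ isT) /orP [/eqP Eb|//].
  by move: ab; rewrite Eb eqxx.
have H1 := key x y xS yS xy (HS x y xS yS).
have H2 := key y x yS xS (ltac:(by rewrite eq_sym)) (HS y x yS xS).
by move: (Ho x y xS yS H1); rewrite H2.
Qed.

Lemma small S : 1 < #|S| ->
  (forall S'', S'' \proper S -> strongb S'' -> #|S''| <= 1) ->
  (strongb S /\ semi_on S) \/ tor_on S.
Proof.
move=> Hc Hsm.
have eq_of : forall P : {set T}, P \subset S -> 1 < #|P| -> strongb P -> P = S.
  move=> P sub cP sP; apply/eqP; rewrite eqEsubset sub /=.
  apply: contraTT cP => nsub; rewrite -leqNgt; apply: Hsm => //.
  by rewrite properE sub nsub.
case: (boolP [exists u in S, exists u' in S, dig u u']).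
  move=> /exists_inP [u uS /exists_inP [u' u'S Hd]].
  have uu' : u != u' by apply: adj_neq; apply: dig_adj.
  move: (Hd) => /andP [H1 H2].
  have sP : strongb [set u; u'].
    apply/connbP => a b; rewrite !in_set2 => /orP [] /eqP -> /orP [] /eqP ->;
    try exact: connect0; apply: connect1; by rewrite /rS !in_set2 !eqxx ?orbT ?H1 ?H2.
  have Eq := eq_of [set u; u'] (ltac:(by apply/subsetP => w; rewrite in_set2 => /orP [] /eqP ->)) 
    (ltac:(by rewrite cards2 uu')) sP.
  left; split; first by rewrite -Eq.
  move=> a b; rewrite -Eq !in_set2 => /orP [] /eqP -> /orP [] /eqP ->;
  rewrite ?eqxx // => _; rewrite ?(dig_adj Hd) //; by rewrite adjC (dig_adj Hd).
move=> /exists_inPn Hnd.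
have nodig : forall a b, a \in S -> b \in S -> E a b -> ~~ E b a.
  move=> a b aS bS Hab; apply/negP => Hba.
  by move: (Hnd a aS) => /exists_inPn /(_ b bS); rewrite /dig Hab Hba.
case: (boolP [exists a in S, exists v in S, exists b in S, [&& E a v, E v b & E b a]]).
  move=> /exists_inP [a aS /exists_inP [v vS /exists_inP [b bS /and3P [Hav Hvb Hba]]]].
  have av : a != v by apply: adj_neq; rewrite /adj Hav.
  have vb : v != b by apply: adj_neq; rewrite /adj Hvb.
  have ab : a != b by apply: contraTneq Hvb => <-; rewrite (negbTE (nodig _ _ aS vS Hav)).
  pose P3 := a |: [set v; b].
  have inP3 : forall w, w \in P3 = [|| w == a, w == v | w == b].
    by move=> w; rewrite /P3 in_setU1 in_set2.
  have toa : forall w, w \in P3 -> connect (rS P3 E) w a /\ connect (rS P3 E) a w.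
    have e1 : rS P3 E a v by rewrite /rS !inP3 !eqxx ?orbT Hav.
    have e2 : rS P3 E v b by rewrite /rS !inP3 !eqxx ?orbT Hvb.
    have e3 : rS P3 E b a by rewrite /rS !inP3 !eqxx ?orbT Hba.
    move=> w; rewrite inP3 => /or3P [] /eqP ->.
    - by split; apply: connect0.
    - split; first exact: connect_trans (connect1 e2) (connect1 e3).
      exact: connect1 e1.
    - split; first exact: connect1 e3.
      exact: connect_trans (connect1 e1) (connect1 e2).
  have sP : strongb P3.
    apply/connbP => x y xP yP; have [Hx _] := toa x xP; have [_ Hy] := toa y yP.
    exact: connect_trans Hx Hy.
  have cP : 1 < #|P3|.
    apply/card_gt1P; exists a, v; by rewrite !inP3 !eqxx ?orbT av.
  have Eq := eq_of P3 (ltac:(by apply/subsetP => w; rewrite inP3 => /or3P [] /eqP ->)) cP sP.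
  left; split; first by rewrite -Eq.
  move=> x y; rewrite -Eq !inP3 => /or3P [] /eqP -> /or3P [] /eqP ->; rewrite ?eqxx // => _;
  rewrite /adj ?Hav ?Hvb ?Hba ?orbT //.
move=> /exists_inPn Hnt; right; split; first exact: nodig.
move=> x y w xS yS wS Hxy Hyw.
have Hadj : adj x w.
  apply/negPn/negP => Hn.
  have A1 : adj y x by rewrite /adj Hxy orbT.
  have A2 : adj y w by rewrite /adj Hyw.
  have [H1 _] := same A1 A2 Hn.
  by move: (nodig _ _ xS yS Hxy); rewrite H1 Hyw.
move: Hadj; rewrite /adj => /orP [//|Hwx].
move: (Hnt x xS) => /exists_inPn /(_ y yS) /exists_inPn /(_ w wS).
by rewrite Hxy Hyw Hwx.
Qed.

Lemma mod_rel S M m m' z : module S M -> m \in M -> m' \in M -> z \in S -> z \notin M ->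
  [/\ E m z = E m' z, E z m = E z m', adj m z = adj m' z & nadj m z = nadj m' z].
Proof.
move=> [_ HM] mM m'M zS zM; have [H1 H2] := HM z m m' zS zM mM m'M.
have mz : m != z by apply: contraNneq zM => <-.
have m'z : m' != z by apply: contraNneq zM => <-.
by rewrite /nadj /adj mz m'z H1 H2.
Qed.

Lemma cardsD_sub S M : M \subset S -> #|S :\: M| = #|S| - #|M|.
Proof. by move=> sub; rewrite cardsD (setIidPr sub). Qed.

Lemma contract S M m0 R : M \subset S -> m0 \in M ->
  (forall m z, m \in M -> z \in S -> z \notin M -> R m z = R m0 z /\ R z m = R z m0) ->
  connb S R -> connb (m0 |: (S :\: M)) R.
Proof.
move=> /subsetP sub m0M HR /connbP HS; apply/connbP.
pose f w := if w \in M then m0 else w.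
have inS2 : forall w, w \in m0 |: (S :\: M) -> w \in S /\ f w = w.
  move=> w; rewrite in_setU1 in_setD => /predU1P [->|/andP [wM wS]].
    by rewrite /f m0M; split => //; apply: sub.
  by rewrite /f (negbTE wM).
have m0S2 : m0 \in m0 |: (S :\: M) by rewrite in_setU1 eqxx.
have outS2 : forall w, w \in S -> w \notin M -> w \in m0 |: (S :\: M).
  by move=> w wS wM; rewrite in_setU1 in_setD wM wS orbT.
move=> x y xS2 yS2; have [xS fx] := inS2 x xS2; have [yS fy] := inS2 y yS2.
rewrite -fx -fy; apply: (conn_map (f := f)) (HS x y xS yS) => a b /and3P [aS bS Rab].
rewrite /f; case: (boolP (a \in M)) => aM; case: (boolP (b \in M)) => bM; [by left| | |].
- right; have [H1 _] := HR a b aM bS bM; by rewrite /rS m0S2 outS2 // -H1.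
- right; have [_ H2] := HR b a bM aS aM; by rewrite /rS m0S2 outS2 // -H2.
- by right; rewrite /rS !outS2.
Qed.

Lemma Xi n : forall S, #|S| <= n -> strongb S -> 1 < #|S| -> connb S nadj ->
  connb S dig && ~~ connb S ow.
Proof.
elim: n => [|n IHn] S Hn sS cS hS; first by move: (leq_trans cS Hn).
have [S' [pS' sS' nS' Hmax]] := maxstrong cS.
have subS' : S' \subset S by move: pS'; rewrite properE => /andP [].
case: (leqP #|S'| 1) => [Hsm|big].
  have := small cS (fun S'' p s => leq_trans (Hmax S'' p s) Hsm).
  case=> [[_ Hsemi]|Htor]; first by case: (semi_not_hconn Hsemi hS cS).
  by case: (tor_not_strong Htor sS cS).
have cardD : #|S :\: S'| = #|S| - #|S'| := cardsD_sub subS'.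
have ltS' : #|S'| < #|S| := proper_card pS'.
case: (leqP 2 #|S :\: S'|) => [many|one].
  have Hpr : forall z, z \in S -> z \notin S' -> strongb (z |: S') -> z |: S' \proper S.
    move=> z zS zS' _; rewrite properEcard; apply/andP; split.
      by apply/subsetP => w; rewrite in_setU1 => /predU1P [->|/(subsetP subS')].
    by rewrite cardsU1 zS' add1n; apply: ar2; rewrite -cardD.
  have Hmod := maxstrong_module pS' sS' Hmax Hpr.
  have [m0 m0S'] : exists m0, m0 \in S' by apply/set0Pn.
  pose S2 := m0 |: (S :\: S').
  have m0D : m0 \notin S :\: S' by rewrite in_setD m0S'.
  have cS2 : #|S2| = (#|S :\: S'|).+1 by rewrite cardsU1 m0D.
  have sS2 : strongb S2.
    apply: contract => // m z mM zS zM; have [H1 H2 _ _] := mod_rel Hmod mM m0S' zS zM.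
    by split.
  have hS2 : connb S2 nadj.
    apply: contract => // m z mM zS zM; have [_ _ _ H4] := mod_rel Hmod mM m0S' zS zM.
    by rewrite !(nadjC z) H4.
  have Hc2 : #|S2| <= n by rewrite cS2 cardD; apply: (ar1 Hn big ltS').
  have Hc2' : 1 < #|S2| by rewrite cS2 ltnS ltnW.
  have /andP [/connbP dS2 _] := IHn S2 Hc2 sS2 Hc2' hS2.
  have [z0 z0D] : exists z0, z0 \in S :\: S'.
    by apply/set0Pn; rewrite -card_gt0 ltnW.
  have m0S2 : m0 \in S2 by rewrite in_setU1 eqxx.
  have z0S2 : z0 \in S2 by rewrite in_setU1 z0D orbT.
  have z0m0 : z0 != m0 by apply: contraNneq m0D => <-.
  have [z zS2 /andP [zm0 Hd]] := exit1 (dS2 m0 z0 m0S2 z0S2) (ltac:(by rewrite eq_sym)).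
  have zD : z \in S :\: S' by move: zS2; rewrite in_setU1 (negbTE zm0).
  move: (zD); rewrite in_setD => /andP [zS' zS].
  move: (Hd) => /andP [Hmz Hzm].
  have sz : strongb (z |: S') by apply: strong_add => //; [exists m0|exists m0].
  have := Hmax _ (Hpr z zS zS' sz) sz; by rewrite cardsU1 zS' ltnn.
have /cards1P [z Hz] : #|S :\: S'| == 1 by rewrite cardD; apply/eqP; apply: ar3; rewrite -?cardD.
have zD : z \in S :\: S' by rewrite Hz in_set1.
move: (zD); rewrite in_setD => /andP [zS' zS].
have onlyz : forall w, w \in S -> w \notin S' -> w = z.
  by move=> w wS wS'; apply/set1P; rewrite -Hz in_setD wS wS'.
have inS : forall w, w \in S' -> w \in S by apply/subsetP.
have S'neq : forall w, w \in S' -> w != z by move=> w wS'; apply: contraNneq zS' => <-.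
have cS' : 1 < #|S'| by [].
have [y yS Hzy] := outnbr sS cS zS.
have yS' : y \in S'.
  apply: contraT => yn; move: (onlyz y yS yn) => Ey; by move: Hzy; rewrite Ey irrE.
have Zall : (forall t, t \in S' -> adj z t) -> False.
  move=> Hall; have [v vS /andP [zv Hnv]] := hnbr hS cS zS.
  have vS' : v \in S' by apply: contraT => vn; move: zv; rewrite (onlyz v vS vn) eqxx.
  by move: (Hall v vS'); rewrite (negbTE Hnv).
case: (boolP (connb S' nadj)) => [hS'|nhS'].
  have /andP [/connbP dS' nAS'] := IHn S' (ltac:(by rewrite -ltnS; apply: leq_trans ltS' Hn)) sS' cS' hS'.
  apply/andP; split.
    case: (boolP [exists d in S', dig z d]) => [/exists_inP [d dIn Hzd]|/exists_inPn Hnd].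
      have tod : forall a, a \in S -> connect (rS S dig) d a.
        move=> a aS; case: (boolP (a \in S')) => aS'.
          exact: conn_lift subS' (dS' d a dIn aS').
        rewrite (onlyz a aS aS'); apply: connect1; by rewrite /rS inS // zS digC.
      apply/connbP => a b aS bS; apply: connect_trans (tod b bS).
      have symd : connect_sym (rS S dig) by apply: connS_sym; exact: digC.
      by rewrite symd tod.
    exfalso; apply: Zall => t tS'.
    have st : forall a b, rS S' dig a b -> adj z a -> adj z b.
      move=> a b /and3P [aS bS Hab] Hza; apply/negPn/negP => Hzb.
      have [H1 H2] := same (v:=a) (u:=z) (w:=b) (ltac:(by rewrite adjC)) (dig_adj Hab) Hzb.
      move: (Hnd a aS); rewrite /dig H1 H2; by move: Hab => /andP [-> ->].
    exact: conn_prop st (dS' y t yS' tS') (ltac:(by rewrite /adj Hzy)).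
  apply/negP => /connbP HA; apply: Zall => t tS'.
  have [p [q [pS qS Hpq]]] := connbPn nAS'.
  pose At := compo S' ow t.
  have modAt := Acomp_module tS'.
  have symow : connect_sym (rS S' ow) by apply: connS_sym; exact: owC.
  have [w0 w0S' w0At] : exists2 w0, w0 \in S' & w0 \notin At.
    case: (boolP (p \in At)) => pA; last by exists p.
    case: (boolP (q \in At)) => qA; last by exists q.
    exfalso; move: pA qA; rewrite !inE => /andP [_ Hp] /andP [_ Hq].
    by move: Hpq; rewrite (connect_trans _ Hq) // symow.
  have tAt : t \in At := compo_self ow tS'.
  have [a [w [aA wA /and3P [aS' wS' Haw]]]] := conn_exit (dS' t w0 tS' w0S') tAt w0At.
  have [H1 H2] := (modAt.2 w a t wS' wA aA tAt).
  have Htw : dig t w by move: Haw; rewrite /dig -H1 -H2 andbC.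
  pose Aw := compo S' ow w.
  have modAw := Acomp_module wS'.
  have tAw : t \notin Aw.
    apply: contra wA; rewrite !inE => /andP [_ Hwt]; by rewrite wS' /= symow.
  have wAw : w \in Aw := compo_self ow wS'.
  have zAw : z \notin Aw by apply: contra zS'; rewrite inE => /andP [].
  have [g [v [gA vA /and3P [gS vS Hgv]]]] := conn_exit (HA w z (inS _ wS') zS) wAw zAw.
  have vz : v = z.
    apply: onlyz => //; apply: contra vA => vS'.
    apply: (compo_step gA vS'); exact: Hgv.
  subst v.
  have gS' : g \in S' by move: gA; rewrite inE => /andP [].
  have [G1 G2] := (modAw.2 t g w tS' tAw gA wAw).
  have Htg : dig t g by move: Htw; rewrite /dig -G1 -G2.
  apply/negPn/negP => Hzt.
  have Agt : adj g t by rewrite adjC; exact: dig_adj Htg.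
  have [K1 K2] := same (ow_adj Hgv) Agt Hzt.
  move: Hgv; rewrite /ow K1 K2; by move: Htg; rewrite digC => /andP [-> ->].
have [p [q [pS qS Hpq]]] := connbPn nhS'.
pose C := compo S' nadj y.
have modC := Hcomp_module yS'.
have symn : connect_sym (rS S' nadj) by apply: connS_sym; exact: nadjC.
have yC : y \in C := compo_self nadj yS'.
have [x0 x0S' x0C] : exists2 x0, x0 \in S' & x0 \notin C.
  case: (boolP (p \in C)) => pA; last by exists p.
  case: (boolP (q \in C)) => qA; last by exists q.
  exfalso; move: pA qA; rewrite !inE => /andP [_ Hp] /andP [_ Hq].
  by move: Hpq; rewrite (connect_trans _ Hq) // symn.
have F1 : forall x c, x \in S' -> x \notin C -> c \in C -> adj x c.
  move=> x c xS' xC cC; apply/negPn/negP => Hnn; case/negP: (xC).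
  apply: (compo_step cC xS'); rewrite /nadj adjC Hnn andbT.
  by apply: contraNneq xC => <-.
have F3a : forall x, x \in S' -> x \notin C -> exists u,
    [/\ u \in S', u \notin C, nadj u z & E y x = E y u /\ E x y = E u y].
  move=> x xS' xC; pose Cx := compo S' nadj x.
  have modCx := Hcomp_module xS'.
  have xCx : x \in Cx := compo_self nadj xS'.
  have yCx : y \notin Cx.
    apply: contra xC; rewrite !inE => /andP [_ Hxy]; by rewrite xS' /= symn.
  have [u [v [uCx vCx /and3P [uS vS Huv]]]] := conn_exit ((connbP _ _ hS) x y (inS _ xS') yS) xCx yCx.
  have uS' : u \in S' by move: uCx; rewrite inE => /andP [].
  have vz : v = z.
    apply: onlyz => //; apply: contra vCx => vS'.
    apply: (compo_step uCx vS'); exact: Huv.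
  subst v; exists u; split => //.
    apply: contra xC => uC; move: uC uCx; rewrite !inE => /andP [_ Hyu] /andP [_ Hxu].
    by rewrite xS' /= (connect_trans Hyu) // symn.
  exact: (modCx.2 y x u yS' yCx xCx uCx).
have F3 : forall x, x \in S' -> x \notin C -> E y x = E y z /\ E x y = E z y.
  move=> x xS' xC; have [u [uS' uC /andP [_ Huz] [T1 T2]]] := F3a x xS' xC.
  have Ayu : adj y u by rewrite adjC; apply: F1.
  have Ayz : adj y z by rewrite /adj Hzy orbT.
  have [U1 U2] := same Ayu Ayz Huz.
  by rewrite T1 T2 U1 U2.
have [u0 [u0S' u0C /andP [_ Hu0z] _]] := F3a x0 x0S' x0C.
have F4 : forall c, c \in C -> adj c z -> E c z = E y z /\ E z c = E z y.
  move=> c cC Acz.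
  have Acu : adj c u0 by rewrite adjC; apply: F1.
  have [V1 V2] := same Acu Acz Hu0z.
  have [M1 M2] := modC.2 u0 c y u0S' u0C cC yC.
  have [W1 W2] := F3 u0 u0S' u0C.
  by rewrite -V1 -V2 M1 M2 W1 W2.
have F5 : forall c x, c \in C -> x \in S' -> x \notin C -> E c x = E y z /\ E x c = E z y.
  move=> c x cC xS' xC; have [M1 M2] := modC.2 x c y xS' xC cC yC.
  have [W1 W2] := F3 x xS' xC.
  by rewrite M1 M2 W1 W2.
have CS' : forall c, c \in C -> c \in S' by move=> c; rewrite inE => /andP [].
have zC : z \notin C by apply: contra zS' => /CS'.
case Eyz : (E y z).
  have Hdyz : dig y z by rewrite /dig Eyz Hzy.
  apply/andP; split.
    have toy : forall a, a \in S -> connect (rS S dig) y a.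
      move=> a aS; case: (boolP (a \in S')) => aS'; last first.
        by rewrite (onlyz a aS aS'); apply: connect1; rewrite /rS yS zS Hdyz.
      case: (boolP (a \in C)) => aC; last first.
        have [W1 W2] := F3 a aS' aC; apply: connect1; by rewrite /rS yS aS /dig W1 W2 Eyz Hzy.
      have [W1 W2] := F3 x0 x0S' x0C.
      have [P1 P2] := F5 a x0 aC x0S' x0C.
      apply: (connect_trans (connect1 (_ : rS S dig y x0))).
        by rewrite /rS yS inS // /dig W1 W2 Eyz Hzy.
      apply: connect1; by rewrite /rS inS // aS /dig P1 P2 Eyz Hzy.
    have symd : connect_sym (rS S dig) by apply: connS_sym; exact: digC.
    by apply/connbP => a b aS bS; apply: connect_trans (toy b bS); rewrite symd toy.
  apply/negP => /connbP HA.
  have [u [v [uC vC /and3P [uS vS Huv]]]] := conn_exit (HA y z yS zS) yC zC.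
  case: (boolP (v \in S')) => vS'.
    have [P1 P2] := F5 u v uC vS' vC; by move: Huv; rewrite /ow P1 P2 Eyz Hzy.
  rewrite (onlyz v vS vS') in Huv.
  have [P1 P2] := F4 u uC (ow_adj Huv); by move: Huv; rewrite /ow P1 P2 Eyz Hzy.
exfalso.
have [u [v [uC vC /and3P [uS vS Huv]]]] := conn_exit ((connbP _ _ sS) y z yS zS) yC zC.
case: (boolP (v \in S')) => vS'.
  have [P1 P2] := F5 u v uC vS' vC; by move: Huv; rewrite P1 Eyz.
rewrite (onlyz v vS vS') in Huv.
have [P1 P2] := F4 u uC (ltac:(by rewrite /adj Huv)); by move: Huv; rewrite P1 Eyz.
Qed.

Lemma lt_card_sub S M w : M \subset S -> w \in S -> w \notin M -> #|M| < #|S|.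
Proof. by move=> sub wS wM; apply: proper_card; apply/properP; split => //; exists w. Qed.

Lemma key S : 1 < #|S| ->
  (exists M, [/\ module S M, 1 < #|M| & #|M| < #|S|]) \/ semi_on S \/ sym_on S \/ tor_on S.
Proof.
move=> cS.
have step3 : connb S nadj -> connb S ow ->
    (exists M, [/\ module S M, 1 < #|M| & #|M| < #|S|]) \/ tor_on S.
  move=> hS aS; case: (boolP (strongb S)) => sS.
    by have /andP [_ /negP] := Xi (leqnn #|S|) sS cS hS.
  have [S' [pS' sS' nS' Hmax]] := maxstrong cS.
  have subS' : S' \subset S by move: pS'; rewrite properE => /andP [].
  case: (leqP #|S'| 1) => [Hsm|big].
    have := small cS (fun S'' p s => leq_trans (Hmax S'' p s) Hsm).
    by case=> [[Hs _]|Ht]; [move: sS; rewrite Hs | right].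
  left; exists S'; split => //; last exact: proper_card.
  apply: maxstrong_module => // z zS zS' sz; rewrite properE.
  have sub : z |: S' \subset S.
    by apply/subsetP => w; rewrite in_setU1 => /predU1P [->|/(subsetP subS')].
  rewrite sub /=; apply/negP => sub2.
  have Eq : z |: S' = S by apply/eqP; rewrite eqEsubset sub sub2.
  by move: sS; rewrite -Eq sz.
case: (boolP [exists x in S, exists y in S, nadj x y]); last first.
  move=> /exists_inPn Hn; right; left => x y xS yS xy.
  move: (Hn x xS) => /exists_inPn /(_ y yS); by rewrite /nadj xy /= negbK.
move=> /exists_inP [x xS /exists_inP [y yS Hxy]].
case: (boolP (connb S nadj)) => hS; last first.
  left; have [p [q [pS qS Hpq]]] := connbPn hS.
  have symn : connect_sym (rS S nadj) by apply: connS_sym; exact: nadjC.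
  have [w0 w0S w0C] : exists2 w0, w0 \in S & w0 \notin compo S nadj x.
    case: (boolP (p \in compo S nadj x)) => pA; last by exists p.
    case: (boolP (q \in compo S nadj x)) => qA; last by exists q.
    exfalso; move: pA qA; rewrite !inE => /andP [_ Hp] /andP [_ Hq].
    by move: Hpq; rewrite (connect_trans _ Hq) // symn.
  exists (compo S nadj x); split; first exact: Hcomp_module.
    apply/card_gt1P; exists x, y; split; first exact: compo_self.
      by apply: compo_step (compo_self nadj xS) yS Hxy.
    by move: Hxy => /andP [].
  exact: lt_card_sub (compo_sub _ _ _) w0S w0C.
case: (boolP [exists x in S, exists y in S, ow x y]); last first.
  move=> /exists_inPn Hn; right; right; left => a b aS bS Hab.
  by move: (Hn a aS) => /exists_inPn /(_ b bS); rewrite /ow negbK Hab => /eqP <-.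
move=> /exists_inP [a aS /exists_inP [b bS Hab]].
case: (boolP (connb S ow)) => aS'; last first.
  left; have [p [q [pS qS Hpq]]] := connbPn aS'.
  have symo : connect_sym (rS S ow) by apply: connS_sym; exact: owC.
  have [w0 w0S w0C] : exists2 w0, w0 \in S & w0 \notin compo S ow a.
    case: (boolP (p \in compo S ow a)) => pA; last by exists p.
    case: (boolP (q \in compo S ow a)) => qA; last by exists q.
    exfalso; move: pA qA; rewrite !inE => /andP [_ Hp] /andP [_ Hq].
    by move: Hpq; rewrite (connect_trans _ Hq) // symo.
  exists (compo S ow a); split; first exact: Acomp_module.
    apply/card_gt1P; exists a, b; split; first exact: compo_self.
      by apply: compo_step (compo_self ow aS) bS Hab.
    by apply: adj_neq; apply: ow_adj.
  exact: lt_card_sub (compo_sub _ _ _) w0S w0C.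
by case: (step3 hS aS') => H; [left | right; right; right].
Qed.

End Core.


Definition asy (a b c d : bool) := (a || b) && (c || d) && ~~ [|| (b && ~~a) && (d && ~~c),
  (a && ~~b) && (c && ~~d) | (b && a) && (d && c)].

Lemma asyncE (T : finType) (E : rel T) v u w :
  asynchronous E v u w = asy (E v u) (E u v) (E v w) (E w v).
Proof. by []. Qed.

Lemma wqt_transfer (A B : finType) (E1 : rel A) (E2 : rel B) (g : B -> A) :
  (forall a b, E2 a b = E1 (g a) (g b)) ->
  weakly_quasi_transitive E1 -> weakly_quasi_transitive E2.
Proof.
move=> Hg H1 v u w; rewrite asyncE !Hg -asyncE => /H1.
by rewrite /adjacent !Hg.
Qed.

Lemma sr_same (I : finType) (D : rel I) (U : I -> finType) (H : forall t, rel (U t))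
  i (x y : U i) : subst_rel D H (Tagged U x) (Tagged U y) = H i x y.
Proof. by rewrite /subst_rel /= eqxx tagged_asE. Qed.

Lemma sr_diff (I : finType) (D : rel I) (U : I -> finType) (H : forall t, rel (U t))
  u v : tag u != tag v -> subst_rel D H u v = D (tag u) (tag v).
Proof. by move=> h; rewrite /subst_rel (negbTE h). Qed.

Lemma sound (T : finType) (E : rel T) : inW E -> is_digraph E /\ weakly_quasi_transitive E.
Proof.
elim => {T E}.
- move=> T E dE [Ho Ht]; split => // v u w.
  have Ob : forall a b, E a b ==> ~~ E b a by move=> a b; apply/implyP; apply: Ho.
  have Tb : forall a b c, E a b ==> (E b c ==> E a c).
    by move=> a b c; apply/implyP => h1; apply/implyP; apply: Ht.
  move: (Ob v u) (Ob v w) (Tb u v w) (Tb w v u).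
  rewrite asyncE /asy /adjacent.
  by case: (E v u); case: (E u v); case: (E v w); case: (E w v); case: (E u w); case: (E w u).
- move=> T E dE Hs; split => // v u w.
  case: (eqVneq u w) => [<-|uw]; last by move: (Hs u w uw).
  rewrite asyncE /asy; by case: (E v u); case: (E u v).
- move=> T E dE Hs; split => // v u w.
  have Sb : forall a b, E a b ==> E b a by move=> a b; apply/implyP; apply: Hs.
  move: (Sb v u) (Sb u v) (Sb v w) (Sb w v); rewrite asyncE /asy.
  by case: (E v u); case: (E u v); case: (E v w); case: (E w v).
- move=> I D U H _ [dD wD] _ HH; split.
    by case=> i x; rewrite sr_same; have [dH _] := HH i; apply: dH.
  case=> i x [j y] [k z].
  case: (eqVneq i j) => [Eij|nij]; case: (eqVneq i k) => [Eik|nik].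
  + move: y z; rewrite -Eij -Eik => y z.
    rewrite asyncE /adjacent !sr_same -asyncE; have [_ wH] := HH i; exact: wH.
  + move: y; rewrite -Eij => y.
    rewrite asyncE /adjacent !sr_same !sr_diff //= ?(eq_sym k) //.
    by rewrite /asy => /andP [/andP [_ ->] _].
  + move: z; rewrite -Eik => z.
    rewrite asyncE /adjacent !sr_same !sr_diff //= ?(eq_sym j) //.
    by rewrite /asy => /andP [/andP [Hh _] _]; rewrite orbC.
  + case: (eqVneq j k) => [Ejk|njk].
      move: z; rewrite -Ejk => z Ha; exfalso; move: Ha.
      rewrite asyncE !sr_diff //= ?(eq_sym j) //.
      by rewrite /asy; case: (D i j); case: (D j i).
    rewrite asyncE /adjacent !sr_diff //= ?(eq_sym j) ?(eq_sym k) // -asyncE.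
    exact: wD.
- move=> T T' E E' f [g fg gf] Hf _ [dE wE].
  have Hg : forall a b, E' a b = E (g a) (g b) by move=> a b; rewrite -Hf !gf.
  split; first by move=> a; rewrite Hg dE.
  exact: wqt_transfer Hg wE.
Qed.


Section Main.
Variable T : finType.
Variable E : rel T.
Hypothesis irrE : irreflexive E.
Hypothesis wqtE : weakly_quasi_transitive E.

Definition ind (S : {set T}) : rel {x : T | x \in S} := fun a b => E (val a) (val b).
Arguments ind : clear implicits.

Lemma ind_dig S : is_digraph (ind S).
Proof. by move=> a; rewrite /ind irrE. Qed.

Section Decomp.
Variables (S M : {set T}) (m0 : T).
Hypothesis modM : module E S M.
Hypothesis m0M : m0 \in M.
Hypothesis cM : 1 < #|M|.
Hypothesis ltM : #|M| < #|S|.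

Let subM : M \subset S := modM.1.
Let S2 := m0 |: (S :\: M).
Let rep w := if w \in M then m0 else w.
Let Blk (t : {x | x \in S2}) : {set T} := [set w in S | rep w == val t].
Let U (t : {x | x \in S2}) : finType := {w : T | w \in Blk t}.
Let H (t : {x | x \in S2}) : rel (U t) := ind (Blk t).

Lemma m0S : m0 \in S. Proof. exact: (subsetP subM). Qed.

Lemma repS2 w : w \in S -> rep w \in S2.
Proof.
move=> wS; rewrite /rep /S2; case: ifP => wM; first by rewrite in_setU1 eqxx.
by rewrite in_setU1 in_setD wM wS orbT.
Qed.

Lemma blkS t w : w \in Blk t -> w \in S.
Proof. by rewrite inE => /andP []. Qed.

Lemma blk_rep t w : w \in Blk t -> rep w = val t.
Proof. by rewrite inE => /andP [_ /eqP]. Qed.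

Lemma ltS2 : #|S2| < #|S|.
Proof.
have [m1 [m2 [m1M m2M m12]]] := card_gt1P cM.
have [m mM mm0] : exists2 m, m \in M & m != m0.
  case: (eqVneq m1 m0) => [E1|]; last by exists m1.
  by exists m2 => //; rewrite -E1 eq_sym.
apply: (lt_card_sub (w := m)).
- apply/subsetP => w; rewrite in_setU1 in_setD => /predU1P [->|/andP [_ //]]; exact: m0S.
- exact: (subsetP subM).
- by rewrite in_setU1 in_setD mM (negbTE mm0).
Qed.

Lemma ltBlk t : #|Blk t| < #|S|.
Proof.
have sub : Blk t \subset S by apply/subsetP => w; apply: blkS.
case: (eqVneq (val t) m0) => [Et|Nt].
  have [w wS wM] : exists2 w, w \in S & w \notin M.
    apply/exists_inP; apply: contraTT ltM => /exists_inPn Hn; rewrite -leqNgt.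
    by apply: subset_leq_card; apply/subsetP => w wS; move: (Hn w wS); rewrite negbK.
  apply: (lt_card_sub sub wS); rewrite inE wS /= /rep (negbTE wM) Et.
  by apply: contraNneq wM => ->.
apply: (lt_card_sub sub m0S); by rewrite inE m0S /= /rep m0M eq_sym.
Qed.

Definition tofS (u : {t : {x | x \in S2} & U t}) : {x | x \in S} :=
  exist _ (val (tagged u)) (blkS (valP (tagged u))).

Definition tofT (a : {x | x \in S}) : {x | x \in S2} := exist _ (rep (val a)) (repS2 (valP a)).

Lemma blk_tofT a : val a \in Blk (tofT a).
Proof. by rewrite inE (valP a) /= eqxx. Qed.

Definition fromS (a : {x | x \in S}) : {t : {x | x \in S2} & U t} :=
  Tagged U (exist _ (val a) (blk_tofT a) : U (tofT a)).

Lemma tofS_bij : bijective tofS.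
Proof.
exists fromS.
  case=> t x; rewrite /fromS /tofS /=.
  have Et : tofT (exist (fun x => x \in S) (val x) (blkS (valP x))) = t.
    by apply: val_inj; rewrite /= (blk_rep (valP x)).
  move: (blk_tofT _); rewrite Et => pf.
  by congr existT; apply: val_inj.
by move=> a; apply: val_inj.
Qed.

Lemma tofS_rel u v : ind S (tofS u) (tofS v) = subst_rel (ind S2) H u v.
Proof.
case: u => t x; case: v => s y; rewrite /ind /tofS /=.
case: (eqVneq t s) => [Ets|Nts].
  move: y; rewrite -Ets => y; by rewrite sr_same.
rewrite sr_diff //=.
have Rx := blk_rep (valP x); have Ry := blk_rep (valP y).
have xS := blkS (valP x); have yS := blkS (valP y).
have [_ HM] := modM.
move: Rx Ry; rewrite /rep.
case: ifP => xM; case: ifP => yM => Rx Ry.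
- by case/eqP: Nts; apply: val_inj; rewrite -Rx -Ry.
- by rewrite -Rx -Ry; have [_ ->] := HM (val y) (val x) m0 yS (negbT yM) xM m0M.
- by rewrite -Rx -Ry; have [-> _] := HM (val x) (val y) m0 xS (negbT xM) yM m0M.
- by rewrite -Rx -Ry.
Qed.

Lemma decomp : inW (ind S2) -> (forall t, inW (ind (Blk t))) -> inW (ind S).
Proof.
move=> H2 HB.
apply: (W_iso (f := tofS)) tofS_bij _ (W_subst (H := H) H2 HB).
by move=> u v; rewrite tofS_rel.
Qed.

End Decomp.

Lemma all_W n : forall S : {set T}, #|S| <= n -> inW (ind S).
Proof.
elim: n => [|n IHn] S Hn.
  apply: W_semi; first exact: ind_dig.
  move=> a b _; exfalso.
  have : 0 < #|S| by apply/card_gt0P; exists (val a); exact: (valP a).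
  by rewrite lt0n -leqn0 Hn.
case: (leqP #|S| 1) => [c1|c2].
  apply: W_semi; first exact: ind_dig.
  move=> a b ab; exfalso; move: ab; apply/negP; rewrite negbK.
  apply/eqP; apply: val_inj; apply/eqP; apply: contraTT c1 => nab; rewrite -ltnNge.
  by apply/card_gt1P; exists (val a), (val b); rewrite (valP a) (valP b).
have IH : forall S' : {set T}, #|S'| < #|S| -> inW (ind S').
  by move=> S' lt; apply: IHn; rewrite -ltnS; apply: leq_trans lt Hn.
case: (key irrE wqtE c2) => [[M [modM cM ltM]]|[Hs|[Hs|Ht]]].
- have [m0 m0M] : exists m0, m0 \in M by apply/set0Pn; rewrite -card_gt0 ltnW.
  apply: (decomp modM m0M); first exact: IH (ltS2 modM m0M cM).
  by move=> t; apply: IH; apply: (ltBlk modM m0M).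
- apply: W_semi; first exact: ind_dig.
  move=> a b ab.
  have nab : val a != val b by apply: contraNneq ab => Eab; apply/eqP; apply: val_inj.
  exact: (Hs _ _ (valP a) (valP b) nab).
- apply: W_sym; first exact: ind_dig.
  by move=> a b; apply: (Hs _ _ (valP a) (valP b)).
- have [Ho Htr] := Ht; apply: W_trans; first exact: ind_dig.
  split; first by move=> a b; apply: (Ho _ _ (valP a) (valP b)).
  by move=> a b c; apply: (Htr _ _ _ (valP a) (valP b) (valP c)).
Qed.

Lemma complete : inW E.
Proof.
have H := all_W (leqnn #|[set: T]|).
apply: (W_iso (f := val)) H.
- by exists (fun x => exist (fun x => x \in [set: T]) x (in_setT x)) => [a|x]; [apply: val_inj|].
- by [].
Qed.

End Main.

Theorem theorem3p2 (T : finType) (E : rel T) :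
  is_digraph E -> (inW E <-> weakly_quasi_transitive E).
Proof.
move=> dE; split; first by move=> /sound [].
by move=> wE; apply: complete.
Qed.
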